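(* Let $t \ge 2$ and $d \ge 2$ be integers. Let $n \ge 2d$ be an integer for which there is an integer $r$ with $n^t \equiv r^t \pmod d$ and $0 \le r^t < d$. Then $\left\lfloor n^t/d \right\rfloor$ is composite. *)

(* Defs.v *)
From mathcomp Require Import all_boot all_algebra.
Set Implicit Arguments. Unset Strict Implicit. Unset Printing Implicit Defensive.

Definition composite (m : nat) : bool := (1 < m)%N && ~~ prime m.

(* Main.v *)
Require Import Defs.
From mathcomp Require Import all_boot all_algebra.
From mathcomp Require Import zify.
Import GRing.Theory Num.Theory.
Local Open Scope ring_scope.

Lemma comp_of_mul (m s : nat) : (2 <= m)%N -> (2 <= s)%N -> composite (m * s).
Proof.
move=> hm hs; rewrite /composite; apply/andP; split; first nia.
apply/negP => /primeP [_ H].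
have := H m (dvdn_mulr _ (dvdnn m)); case/orP => /eqP; nia.
Qed.

Lemma nat_core (t d n a : nat) : (2 <= t)%N -> (2 <= d)%N -> (2 * d <= n)%N ->
  (a ^ t < d)%N -> (n ^ t %% d = a ^ t)%N -> composite (n ^ t %/ d)%N.
Proof.
move=> ht hd hn hat hmod.
have had : (a < d)%N.
  case: a hat {hmod} => [|a] hat; first nia.
  apply: leq_ltn_trans hat; rewrite -{1}(expn1 a.+1); apply: leq_pexp2l => //; lia.
set q := (n ^ t %/ d)%N.
set S := (\sum_(i < t) n ^ (t.-1 - i) * a ^ i)%N.
have hqd : (q * d = (n - a) * S)%N.
  rewrite -subn_exp; have := divn_eq (n ^ t) d; rewrite hmod -/q; lia.
have hS : (n <= S)%N.
  rewrite /S; case: t ht {hqd hat hmod q S} => [|t] ht //.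
  rewrite big_ord_recl /= subn0 expn0 muln1.
  apply: leq_trans (leq_addr _ _).
  rewrite -{1}(expn1 n); apply: leq_pexp2l; lia.
set g := gcdn (n - a) d.
have gpos : (0 < g)%N by rewrite gcdn_gt0; apply/orP; right; lia.
have [m hm] : exists m, (n - a = m * g)%N by apply/dvdnP; apply: dvdn_gcdl.
have [d' hd'] : exists d', (d = d' * g)%N by apply/dvdnP; apply: dvdn_gcdr.
have cop : coprime m d'.
  rewrite /coprime.
  have : g = (gcdn m d' * g)%N by rewrite muln_gcdl -hm -hd'.
  move=> e; apply/eqP; apply/eqP; rewrite -(eqn_pmul2r gpos) mul1n -e //.
have hqd' : (q * d' = m * S)%N.
  apply/eqP; rewrite -(eqn_pmul2r gpos); apply/eqP; move: hqd; rewrite hd' hm; lia.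
have [s hs] : exists s, (S = s * d')%N.
  have cop' : coprime d' m by rewrite coprime_sym.
  apply/dvdnP; rewrite -(Gauss_dvdr S cop').
  by rewrite -hqd' dvdn_mull.
have d'pos : (0 < d')%N by move: hd; rewrite hd'; nia.
have -> : q = (m * s)%N.
  apply/eqP; rewrite -(eqn_pmul2r d'pos); apply/eqP; rewrite hqd' hs; lia.
apply: comp_of_mul.
- have gled : (g <= d)%N by apply: dvdn_leq; [lia | apply: dvdn_gcdr].
  move: hm; nia.
- move: hS hn; rewrite hs hd'; nia.
Qed.

Theorem lemma1 (t d n : nat) (r : int)
  (ht : (2 <= t)%N) (hd : (2 <= d)%N) (hn : (2 * d <= n)%N)
  (hcong : ((n%:Z) ^+ t = r ^+ t %[mod d%:Z])%Z)
  (hr0 : 0 <= r ^+ t) (hr1 : r ^+ t < d%:Z) :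
  composite (n ^ t %/ d)%N.
Proof.
have er : r ^+ t = ((absz r) ^ t)%N%:Z.
  by rewrite -(ger0_norm hr0) normrX -abszE -!natz natrX.
rewrite er in hcong hr0 hr1.
have en : (n%:Z) ^+ t = ((n ^ t)%N)%:Z by rewrite -!natz natrX.
rewrite en !modz_nat in hcong.
case: hcong => hcong.
have hat : (absz r ^ t < d)%N by rewrite -ltz_nat.
apply: (nat_core _ _ _ _ ht hd hn hat).
by rewrite hcong modn_small.
Qed.
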